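(* Let $\Omega\subset\mathbb{R}^N$ be an open domain, let $g:\mathbb{R}^N\setminus\Omega\to\mathbb{R}$ be bounded, and let $\mathcal{A}:\Omega\times\mathcal{X}\times\mathbb{R}\to\mathbb{R}$ satisfy assumptions (a), (b), (c) below. Consider the DPP with boundary values $$\mathcal{A}(x,u,u(x))=0 \ (x\in\Omega),\qquad u(x)=g(x)\ (x\in\mathbb{R}^N\setminus\Omega). \tag{DPP}$$ Assume that either (H1) there exists at least one viscosity subsolution of (DPP), and (H2) all viscosity subsolutions of (DPP) are uniformly bounded from above (i.e. there is $M\in\mathbb{R}$ with $v\le M$ on $\mathbb{R}^N$ for every viscosity subsolution $v$); or (H1* ) there exists at least one viscosity supersolution of (DPP), and (H2* ) all viscosity supersolutions of (DPP) are uniformly bounded from below. Then there exists at least one viscosity solution of (DPP).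
   Context: $\overline{\mathcal{X}}$ denotes the set of bounded functions $f:\mathbb{R}^N\to\mathbb{R}$, and $\mathcal{X}\subset\overline{\mathcal{X}}$ is a fixed subset. Assumptions on $\mathcal{A}$: (a) $\mathcal{A}$ is nonincreasing in the second variable: for all $(x,s)$ and all $\varphi_1,\varphi_2\in\mathcal{X}$ with $\varphi_1\le\varphi_2$ on $\mathbb{R}^N$, $\mathcal{A}(x,\varphi_2,s)\le\mathcal{A}(x,\varphi_1,s)$; (b) $\mathcal{A}$ is nondecreasing in the third variable: for all $(x,\varphi)$ and $s_1\le s_2$, $\mathcal{A}(x,\varphi,s_1)\le\mathcal{A}(x,\varphi,s_2)$; (c) for every $(x,\varphi)$ the map $s\mapsto\mathcal{A}(x,\varphi,s)$ has exactly one zero. Viscosity solutions of (DPP): $u\in\overline{\mathcal{X}}$ is a viscosity supersolution if $u(x)\ge g(x)$ for all $x\in\mathbb{R}^N\setminus\Omega$ and, for every $x\in\Omega$, $\mathcal{A}(x,\varphi,u(x))\ge0$ for all $\varphi\in\mathcal{X}$ with $\varphi\le u$ on $\mathbb{R}^N$. $u\in\overline{\mathcal{X}}$ is a viscosity subsolution if $u(x)\le g(x)$ for all $x\in\mathbb{R}^N\setminus\Omega$ and, for every $x\in\Omega$, $\mathcal{A}(x,\varphi,u(x))\le0$ for all $\varphi\in\mathcal{X}$ with $\varphi\ge u$ on $\mathbb{R}^N$. A viscosity solution is a function $u\in\overline{\mathcal{X}}$ that is both a viscosity subsolution and a viscosity supersolution. *)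

(* Defs.v *)
From HB Require Import structures.
From mathcomp Require Import all_boot all_order all_algebra.
From mathcomp Require Import all_classical all_reals all_analysis.
Set Implicit Arguments. Unset Strict Implicit. Unset Printing Implicit Defensive.
Import Order.TTheory GRing.Theory Num.Theory.
Import numFieldNormedType.Exports.
Local Open Scope classical_set_scope.
Local Open Scope ring_scope.

Section DPP.
Variables (R : realType) (N : nat).
Notation pt := 'rV[R]_N.

Definition bdd_fun (f : pt -> R) : Prop := exists M : R, forall x, `|f x| <= M.

Definition A_noninc2 (Omega : set pt) (X : set (pt -> R))
  (A : pt -> (pt -> R) -> R -> R) : Prop :=
  forall x s phi1 phi2, Omega x -> X phi1 -> X phi2 ->
    (forall y, phi1 y <= phi2 y) -> A x phi2 s <= A x phi1 s.

Definition A_nondecr3 (Omega : set pt) (X : set (pt -> R))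
  (A : pt -> (pt -> R) -> R -> R) : Prop :=
  forall x phi s1 s2, Omega x -> X phi -> s1 <= s2 -> A x phi s1 <= A x phi s2.

Definition A_unique_zero (Omega : set pt) (X : set (pt -> R))
  (A : pt -> (pt -> R) -> R -> R) : Prop :=
  forall x phi, Omega x -> X phi -> exists! s, A x phi s = 0.

Definition visc_supersol (Omega : set pt) (X : set (pt -> R))
  (A : pt -> (pt -> R) -> R -> R) (g : pt -> R) (u : pt -> R) : Prop :=
  bdd_fun u /\
  (forall x, ~ Omega x -> g x <= u x) /\
  (forall x, Omega x -> forall phi, X phi -> (forall y, phi y <= u y) ->
     0 <= A x phi (u x)).

Definition visc_subsol (Omega : set pt) (X : set (pt -> R))
  (A : pt -> (pt -> R) -> R -> R) (g : pt -> R) (u : pt -> R) : Prop :=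
  bdd_fun u /\
  (forall x, ~ Omega x -> u x <= g x) /\
  (forall x, Omega x -> forall phi, X phi -> (forall y, u y <= phi y) ->
     A x phi (u x) <= 0).

Definition visc_sol Omega X A g u : Prop :=
  visc_subsol Omega X A g u /\ visc_supersol Omega X A g u.

End DPP.

(* Main.v *)
Require Import Defs.
From HB Require Import structures.
From mathcomp Require Import all_boot all_order all_algebra.
From mathcomp Require Import all_classical all_reals all_analysis.
From mathcomp Require Import lra.
Import Order.TTheory GRing.Theory Num.Theory.
Import numFieldNormedType.Exports.
Local Open Scope classical_set_scope.
Local Open Scope ring_scope.

Lemma perron_sub (R : realType) (N : nat) (Omega : set 'rV[R]_N)
  (X : set ('rV[R]_N -> R)) (g : 'rV[R]_N -> R)
  (A : 'rV[R]_N -> ('rV[R]_N -> R) -> R -> R) :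
  (exists M : R, forall x, ~ Omega x -> `|g x| <= M) ->
  A_noninc2 Omega X A -> A_nondecr3 Omega X A -> A_unique_zero Omega X A ->
  (exists v, visc_subsol Omega X A g v) ->
  (exists M : R, forall v, visc_subsol Omega X A g v -> forall y, v y <= M) ->
  exists u, visc_sol Omega X A g u.
Proof.
move=> [Mg hg] hA hB hC [v0 hv0] [M hM].
pose S := visc_subsol Omega X A g.
pose E x := [set r | exists2 v, S v & r = v x].
pose u x := sup (E x).
have hE x : has_sup (E x).
  split; first by exists (v0 x); exists v0.
  by exists M => r [v Sv ->]; apply: hM.
have U1 v x : S v -> v x <= u x.
  by move=> Sv; apply: (sup_upper_bound (hE x)); exists v.
have U2 x c : (forall v, S v -> v x <= c) -> u x <= c.
  by move=> H; apply: ge_sup; [case: (hE x)| move=> r [v Sv ->]; apply: H].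
have [B hB0] := hv0.1.
have ubdd : bdd_fun u.
  exists (`|M| + B) => x; rewrite ler_norml; apply/andP; split.
    have := hB0 x; rewrite ler_norml => /andP [h1 _].
    have := U1 v0 x hv0.
    have : 0 <= `|M| by [].
    move=> h2 h3; apply: (le_trans _ h3); apply: (le_trans _ h1).
    lra.
  apply: U2 => v Sv; apply: (le_trans (hM v Sv x)).
  have := hB0 x; have := normr_ge0 (v0 x); have := ler_norm M; lra.
have bump x c : (Omega x -> forall psi, X psi -> (forall y, u y <= psi y) -> A x psi c <= 0) ->
   (~ Omega x -> c <= g x) -> u x < c -> False.
  move=> hin hout hlt.
  pose w y := if y == x then c else u y.
  have Sw : S w.
    split.
      case: ubdd => K hK; exists (K + `|c|) => y; rewrite /w.
      case: eqP => _; first by have := hK y; have := normr_ge0 (u y); lra.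
      by have := hK y; have := normr_ge0 c; lra.
    split.
      move=> y hy; rewrite /w; case: eqP => [eyx|_]; first by subst y; exact: hout.
      by apply: U2 => v Sv; apply: Sv.2.1.
    move=> y hy psi Xpsi hpsi; rewrite /w; case: eqP => [eyx|nyx].
      subst y; apply: hin => // z; apply: le_trans (hpsi z).
      rewrite /w; case: eqP => [->|_ //]; exact: ltW.
    have [s [hs0 hsu]] := hC y psi hy Xpsi.
    have key : forall v, S v -> v y <= s.
      move=> v Sv; rewrite leNgt; apply/negP => hlt2.
      have h1 : A y psi (v y) <= 0.
        apply: Sv.2.2 => // z; apply: le_trans (U1 v z Sv) _.
        apply: le_trans (hpsi z); rewrite /w; case: eqP => [->|_ //]; exact: ltW.
      have h2 : 0 <= A y psi (v y) by rewrite -hs0; apply: hB => //; exact: ltW.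
      have : s = v y by apply: hsu; apply/eqP; rewrite eq_le h1 h2.
      by move=> e; rewrite e ltxx in hlt2.
    by rewrite -hs0; apply: hB => //; apply: U2.
  have := U1 w x Sw; rewrite /w eqxx; lra.
exists u; split.
  split=> //; split.
    by move=> x hx; apply: U2 => v Sv; apply: Sv.2.1.
  move=> x hx phi Xphi hphi.
  have [s [hs0 hsu]] := hC x phi hx Xphi.
  have key : forall v, S v -> v x <= s.
    move=> v Sv; rewrite leNgt; apply/negP => hlt2.
    have h1 : A x phi (v x) <= 0.
      by apply: Sv.2.2 => // z; apply: le_trans (U1 v z Sv) _.
    have h2 : 0 <= A x phi (v x) by rewrite -hs0; apply: hB => //; exact: ltW.
    have : s = v x by apply: hsu; apply/eqP; rewrite eq_le h1 h2.
    by move=> e; rewrite e ltxx in hlt2.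
  by rewrite -hs0; apply: hB => //; apply: U2.
split=> //; split.
  move=> x hx; rewrite leNgt; apply/negP => hlt.
  apply: (bump x (g x)) => //.
move=> x hx phi Xphi hphi; rewrite leNgt; apply/negP => hlt.
have [s [hs0 hsu]] := hC x phi hx Xphi.
apply: (bump x s).
  - move=> _ psi Xpsi hpsi; rewrite -hs0; apply: hA => // y.
  exact: le_trans (hphi y) (hpsi y).
  - by [].
rewrite ltNge; apply/negP => hle.
have : 0 <= A x phi (u x) by rewrite -hs0; apply: hB.
lra.
Qed.
Section Flip.
Variables (R : realType) (N : nat) (Omega : set 'rV[R]_N)
  (X : set ('rV[R]_N -> R)) (g : 'rV[R]_N -> R)
  (A : 'rV[R]_N -> ('rV[R]_N -> R) -> R -> R).
Let X' : set ('rV[R]_N -> R) := fun phi => X (fun y => - phi y).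
Let A' x (phi : 'rV[R]_N -> R) s := - A x (fun y => - phi y) (- s).
Let g' y := - g y.

Lemma nnK (f : 'rV[R]_N -> R) : (fun y => - - f y) = f.
Proof. by apply: funext => y; rewrite opprK. Qed.

Lemma bddN (u : 'rV[R]_N -> R) : bdd_fun u -> bdd_fun (fun y => - u y).
Proof. by case=> M h; exists M => y; rewrite normrN. Qed.

Lemma L1 u : visc_subsol Omega X' A' g' u -> visc_supersol Omega X A g (fun y => - u y).
Proof.
case=> hb [ho hi]; split; first exact: bddN.
split; first by move=> x hx; have := ho x hx; rewrite /g'; lra.
move=> x hx psi Xpsi hpsi.
have := hi x hx (fun y => - psi y); rewrite /X' /A' /= nnK => h.
have := h Xpsi; move=> /(_ _) h2.
suff: - A x psi (- u x) <= 0 by lra.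
by apply: h2 => y; have := hpsi y; lra.
Qed.

Lemma L2 v : visc_supersol Omega X A g v -> visc_subsol Omega X' A' g' (fun y => - v y).
Proof.
case=> hb [ho hi]; split; first exact: bddN.
split; first by move=> x hx; have := ho x hx; rewrite /g'; lra.
move=> x hx phi Xphi hphi; rewrite /A' opprK.
suff: 0 <= A x (fun y => - phi y) (v x) by lra.
by apply: hi => // y; have := hphi y; lra.
Qed.

Lemma L3 u : visc_supersol Omega X' A' g' u -> visc_subsol Omega X A g (fun y => - u y).
Proof.
case=> hb [ho hi]; split; first exact: bddN.
split; first by move=> x hx; have := ho x hx; rewrite /g'; lra.
move=> x hx psi Xpsi hpsi.
have := hi x hx (fun y => - psi y); rewrite /X' /A' /= nnK => h.
have := h Xpsi; move=> /(_ _) h2.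
suff: 0 <= - A x psi (- u x) by lra.
by apply: h2 => y; have := hpsi y; lra.
Qed.

Lemma flipA : A_noninc2 Omega X A -> A_nondecr3 Omega X A -> A_unique_zero Omega X A ->
  A_noninc2 Omega X' A' /\ A_nondecr3 Omega X' A' /\ A_unique_zero Omega X' A'.
Proof.
move=> hA hB hC; split; last split.
  - move=> x s p1 p2 hx X1 X2 h; rewrite /A'.
  suff: A x (fun y => - p1 y) (- s) <= A x (fun y => - p2 y) (- s) by lra.
  by apply: hA => // y; have := h y; lra.
  - move=> x p s1 s2 hx Xp h; rewrite /A'.
  suff: A x (fun y => - p y) (- s2) <= A x (fun y => - p y) (- s1) by lra.
  by apply: hB => //; lra.
  - move=> x p hx Xp; have [t [ht hu]] := hC x _ hx Xp.
  exists (- t); split; first by rewrite /A' opprK ht oppr0.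
  move=> s; rewrite /A' => /eqP; rewrite oppr_eq0 => /eqP /hu ->; by rewrite opprK.
Qed.

End Flip.

Theorem mainTheorem1 (R : realType) (N : nat) (Omega : set 'rV[R]_N)
  (X : set ('rV[R]_N -> R)) (g : 'rV[R]_N -> R)
  (A : 'rV[R]_N -> ('rV[R]_N -> R) -> R -> R) :
  open Omega ->
  X `<=` @bdd_fun R N ->
  (exists M : R, forall x, ~ Omega x -> `|g x| <= M) ->
  A_noninc2 Omega X A -> A_nondecr3 Omega X A -> A_unique_zero Omega X A ->
  ((exists v, visc_subsol Omega X A g v) /\
   (exists M : R, forall v, visc_subsol Omega X A g v -> forall y, v y <= M))
  \/
  ((exists v, visc_supersol Omega X A g v) /\
   (exists M : R, forall v, visc_supersol Omega X A g v -> forall y, M <= v y)) ->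
  exists u, visc_sol Omega X A g u.
Proof.
move=> _ _ hg hA hB hC [[h1 h2]|[[v hv] [M hM]]]; first exact: perron_sub.
case: (@flipA R N Omega X A hA hB hC) => hA' [hB' hC'].
have [u [su Su]] : exists u, visc_sol Omega (fun phi => X (fun y => - phi y))
  (fun x phi s => - A x (fun y => - phi y) (- s)) (fun y => - g y) u.
  apply: (@perron_sub R N Omega (fun phi => X (fun y => - phi y))
  (fun y => - g y) (fun x phi s => - A x (fun y => - phi y) (- s))).
  - by case: hg => Mg h; exists Mg => x hx; rewrite normrN; apply: h.
  - exact: hA'.
  - exact: hB'.
  - exact: hC'.
  - by exists (fun y => - v y); exact: (@L2 R N Omega X g A v hv).
  - exists (- M) => w hw y; have h := hM _ (@L1 R N Omega X g A _ hw) y; rewrite lerNr; exact: h.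
by exists (fun y => - u y); split; [exact: (@L3 R N Omega X g A u Su) | exact: (@L1 R N Omega X g A u su)].
Qed.
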